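(* Let $p>2$ be a prime and let $a,b\in\mathbb{C}_p$ with $a\neq0$, $b\neq0$, $a\neq b$, $|2a|_p=|b|_p$ and $|2a-b|_p=|a|_p$. Let $P=-\frac1b$, $D=\mathbb{C}_p\setminus\{P\}$, $f(x)=\frac{ax^2}{bx+1}$ on $D$, $x_1=0$, $x_2=\frac1{a-b}$. Then $x_1$ is an attracting fixed point and $x_2$ is an indifferent fixed point of $f$, and $$A(x_1)=B_{\frac{1}{|a|_p}}(x_1),\qquad SI(x_2)=B_{\frac1{|a-b|_p}}(x_2).$$
   Context: $\mathbb{C}_p$ is the field of complex $p$-adic numbers with $p$-adic norm $|\cdot|_p$. For $c\in\mathbb{C}_p$, $r>0$: $B_r(c)=\{x:|x-c|_p<r\}$, $S_r(c)=\{x:|x-c|_p=r\}$. For $y\in D$, $y^{(n)}=f^n(y)$ is the $n$-th iterate (defined as long as no earlier iterate equals $P$). A fixed point $x^{(0)}$ of $f$ is attracting if $|f'(x^{(0)})|_p<1$ and indifferent if $|f'(x^{(0)})|_p=1$. Its basin of attraction is $A(x^{(0)})=\{y: y^{(n)}\text{ defined for all }n,\ y^{(n)}\to x^{(0)}\}$. A ball $B_r(x^{(0)})$ contained in $D$ is a Siegel disk of $x^{(0)}$ if every sphere $S_\rho(x^{(0)})$ with $\rho<r$ is invariant, i.e. $x\in S_\rho(x^{(0)})$ implies $x^{(n)}\in S_\rho(x^{(0)})$ for all $n\ge1$; the maximal Siegel disk $SI(x^{(0)})$ is the union of all Siegel disks centered at $x^{(0)}$. *)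

(* Defs.v *)
From HB Require Import structures.
From mathcomp Require Import all_boot all_order all_algebra.
From mathcomp Require Import reals.
Set Implicit Arguments. Unset Strict Implicit. Unset Printing Implicit Defensive.
Import Order.TTheory GRing.Theory Num.Theory.
Local Open Scope ring_scope.

Section Cp.
Variables (R : realType) (K : closedFieldType) (nrm : K -> R).

(* Axiomatic description of (K, nrm) being C_p, the field of complex p-adic
   numbers: an algebraically closed field (K : closedFieldType) with a
   non-archimedean absolute value normalised by |p| = 1/p, complete, and in
   which the algebraic closure of Q is dense.  These properties characterise
   C_p up to isometric isomorphism. *)
Definition is_Cp (p : nat) : Prop :=
  nrm 0 = 0 /\
      (forall x : K, x != 0 -> 0 < nrm x) /\
      (forall x y : K, nrm (x * y) = nrm x * nrm y) /\
      (forall x y : K, nrm (x + y) <= Num.max (nrm x) (nrm y)) /\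
      (forall n : nat, (0 < n)%N -> (n%:R : K) != 0) /\
      nrm (p%:R) = (p%:R)^-1 /\
      (forall u : nat -> K,
          (forall eps : R, 0 < eps -> exists N : nat, forall m n : nat,
              (N <= m)%N -> (N <= n)%N -> nrm (u m - u n) < eps) ->
          exists l : K, forall eps : R, 0 < eps -> exists N : nat,
              forall n : nat, (N <= n)%N -> nrm (u n - l) < eps) /\
      (forall (x : K) (eps : R), 0 < eps -> exists y : K,
          (exists q : {poly int}, q != 0 /\ root (map_poly intr q) y) /\
          nrm (x - y) < eps).

Definition ball (c : K) (r : R) (x : K) : Prop := nrm (x - c) < r.
Definition sphere (c : K) (r : R) (x : K) : Prop := nrm (x - c) = r.

Variables (f : K -> K) (P : K).
Definition inD (x : K) : Prop := x != P.

Definition has_deriv (x d : K) : Prop :=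
  forall eps : R, 0 < eps -> exists delta : R, 0 < delta /\
    forall y : K, 0 < nrm (y - x) < delta ->
      nrm ((f y - f x) / (y - x) - d) < eps.

Definition fixed_point (x : K) : Prop := inD x /\ f x = x.

Definition attracting (x : K) : Prop :=
  fixed_point x /\ exists d, has_deriv x d /\ nrm d < 1.

Definition indifferent (x : K) : Prop :=
  fixed_point x /\ exists d, has_deriv x d /\ nrm d = 1.

(* y^(n) = iter n f y is defined for all n iff no iterate equals P *)
Definition basin (x0 y : K) : Prop :=
  (forall k : nat, iter k f y != P) /\
  (forall eps : R, 0 < eps -> exists N : nat, forall n : nat, (N <= n)%N ->
      nrm (iter n f y - x0) < eps).

Definition siegel_disk (x0 : K) (r : R) : Prop :=
  0 < r /\ (forall x, ball x0 r x -> inD x) /\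
  forall rho : R, rho < r -> forall x : K, sphere x0 rho x ->
    forall n : nat, (1 <= n)%N -> sphere x0 rho (iter n f x).

Definition SI (x0 y : K) : Prop := exists r : R, siegel_disk x0 r /\ ball x0 r y.

End Cp.

(* Main.v *)
Require Import Defs.
From HB Require Import structures.
From mathcomp Require Import all_boot all_order all_algebra.
From mathcomp Require Import reals.
From mathcomp Require Import ring lra.
Import Order.TTheory GRing.Theory Num.Theory.
Local Open Scope ring_scope.


Lemma bern (R : realType) (h : R) n : 0 <= h -> 1 + n%:R * h <= (1+h)^+n.
Proof.
move=> h0; elim: n => [|n IH]; first by rewrite mul0r addr0 expr0.
rewrite exprSr; apply: le_trans (_ : (1 + n%:R * h) * (1 + h) <= _).
  have n0 : 0 <= n%:R :> R by [].
  rewrite -natr1; nra.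
by rewrite ler_wpM2r // addr_ge0.
Qed.

Lemma geom (R : realType) (t eps : R) : 0 <= t -> t < 1 -> 0 < eps ->
  exists N, forall n, (N <= n)%N -> t ^+ n < eps.
Proof.
move=> t0 t1 e0; case: (eqVneq t 0) => [->|tn0].
  by exists 1%N => -[|n] // _; rewrite expr0n.
have tp : 0 < t by rewrite lt_neqAle eq_sym tn0.
set h := t^-1 - 1.
have hp : 0 < h by rewrite /h subr_gt0 invf_gt1.
set N := Num.bound (eps^-1 / h).
have e'0 : 0 < eps^-1 by rewrite invr_gt0.
have HN := @archi_boundP R (eps^-1 / h) (ltW (divr_gt0 e'0 hp)).
have key : eps^-1 < t^-1 ^+ N.
  apply: lt_le_trans (_ : N%:R * h <= _).
    by rewrite -ltr_pdivrMr.
  have B := @bern R h N (ltW hp); have E : 1 + h = t^-1 by rewrite /h addrC subrK.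
  rewrite E in B; lra.
have tN : t ^+ N < eps.
  have sp : 0 < t^-1 ^+ N by rewrite exprn_gt0 // invr_gt0.
  rewrite exprVn in key.
  rewrite -[eps]invrK -[t ^+ N]invrK ltf_pV2 ?posrE ?invr_gt0 //.
  by rewrite exprn_gt0.
exists N => n Nn; apply: le_lt_trans tN.
by apply: ler_wiXn2l => //; exact: ltW.
Qed.

Section Main.
Variables (R : realType) (K : closedFieldType) (nrm : K -> R).
Hypotheses (n0 : nrm 0 = 0) (npos : forall x, x != 0 -> 0 < nrm x)
  (nM : forall x y, nrm (x * y) = nrm x * nrm y)
  (nD : forall x y, nrm (x + y) <= Num.max (nrm x) (nrm y)).

Lemma np {x : K} : x != 0 -> 0 < nrm x.
Proof. exact: npos. Qed.

Lemma nge0 x : 0 <= nrm x.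
Proof. by case: (eqVneq x 0) => [->|/np/ltW]; rewrite ?n0. Qed.

Lemma n1 : nrm 1 = 1.
Proof.
have h := nM 1 1; rewrite mulr1 in h.
have p1 := np (oner_neq0 K).
by apply: (mulfI (lt0r_neq0 p1)); rewrite mulr1 -h.
Qed.

Lemma nN x : nrm (- x) = nrm x.
Proof.
have h : nrm (-1) ^+ 2 = 1 by rewrite expr2 -nM mulrNN mulr1 n1.
have hp : 0 < nrm (-1) by apply: np; rewrite oppr_eq0 oner_neq0.
have e : nrm (-1) = 1.
  move/eqP: h; rewrite sqrf_eq1 => /orP[/eqP //|/eqP e].
  by move: hp; rewrite e ltr0N1.
by rewrite -mulN1r nM e mul1r.
Qed.

Lemma nV x : nrm (x^-1) = (nrm x)^-1.
Proof.
case: (eqVneq x 0) => [->|xn0]; first by rewrite invr0 n0 invr0.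
have p := lt0r_neq0 (np xn0).
by apply: (mulfI p); rewrite -nM mulfV // n1 mulfV.
Qed.

Lemma ndiv x y : nrm (x / y) = nrm x / nrm y.
Proof. by rewrite nM nV. Qed.

Lemma nX2 x : nrm (x ^+ 2) = nrm x ^+ 2.
Proof. by rewrite !expr2 nM. Qed.

Lemma nB x y : nrm (x - y) <= Num.max (nrm x) (nrm y).
Proof. by rewrite -(nN y). Qed.

Lemma nDlt x y : nrm x < nrm y -> nrm (x + y) = nrm y.
Proof.
move=> lt; apply/eqP; rewrite eq_le; apply/andP; split.
  by have := nD x y; rewrite (max_idPr (ltW lt)).
rewrite addrC; have := nD (y + x) (- x); rewrite addrK nN le_max => /orP[//|h].
by move: lt; rewrite ltNge h.
Qed.

Lemma nDlt' x y : nrm y < nrm x -> nrm (x + y) = nrm x.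
Proof. by rewrite addrC; apply: nDlt. Qed.

Lemma hab_of (a b : K) : nrm (2 * a) = nrm b -> nrm (2 * a - b) = nrm a ->
  nrm b = nrm a.
Proof.
move=> h1 h2.
have n2 : nrm (2 : K) <= 1.
  have -> : (2 : K) = 1 + 1 by rewrite mulr2n.
  by have := nD 1 1; rewrite n1 maxxx.
apply/eqP; rewrite eq_le; apply/andP; split.
  rewrite -h1 nM; have := nge0 a; nra.
by have := nB (2 * a) b; rewrite h2 h1 maxxx.
Qed.

Variables (a b : K).
Hypotheses (a0 : a != 0) (b0 : b != 0) (ab : a != b)
  (hab : nrm b = nrm a) (h2ab : nrm (2 * a - b) = nrm a).

Definition A := nrm a.
Definition C := nrm (a - b).
Definition f x := a * x ^+ 2 / (b * x + 1).
Definition P := - b^-1.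
Definition x2 := (a - b)^-1.

Lemma Ap : 0 < A. Proof. exact: np. Qed.
Lemma iAp : 0 < A^-1. Proof. by rewrite invr_gt0 Ap. Qed.
Lemma Cp : 0 < C. Proof. by apply: np; rewrite subr_eq0. Qed.
Lemma CA : C <= A.
Proof. by have := nB a b; rewrite hab maxxx. Qed.

Lemma nP : nrm P = A^-1.
Proof. by rewrite /P nN nV hab. Qed.

Lemma bxP x : b * x + 1 = b * (x - P).
Proof. by rewrite /P opprK mulrDr mulfV. Qed.

Lemma f_small x : nrm x < A^-1 -> nrm (f x) = A * nrm x ^+ 2.
Proof.
move=> hx.
have h1 : nrm (b * x) < nrm 1.
  rewrite nM hab n1 -(mulfV (lt0r_neq0 Ap)) ltr_pM2l //; exact: Ap.
by rewrite /f ndiv nM nDlt // n1 invr1 mulr1 nX2.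
Qed.

Lemma f_big x : A^-1 <= nrm x -> x != P -> nrm x <= nrm (f x).
Proof.
move=> hx xP.
have Axp : 1 <= A * nrm x.
  by rewrite -(mulfV (lt0r_neq0 Ap)) ler_pM2l //; exact: Ap.
have d0 : b * x + 1 != 0 by rewrite bxP mulf_eq0 negb_or b0 subr_eq0.
have dp := np d0.
have dle : nrm (b * x + 1) <= A * nrm x.
  by have := nD (b * x) 1; rewrite nM hab n1 (max_idPl Axp).
rewrite /f ndiv nM nX2 ler_pdivlMr //.
have nxp : 0 <= nrm x := nge0 x.
rewrite /A; rewrite /A in dle; nra.
Qed.

Lemma basin_iff y : basin nrm f P 0 y <-> nrm (y - 0) < A^-1.
Proof.
rewrite subr0; split.
  move=> [nP' conv]; rewrite ltNge; apply/negP => big.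
  have all : forall n, A^-1 <= nrm (iter n f y).
    elim=> [//|n IH] /=; apply: le_trans (IH) _; apply: f_big => //.
  have [N HN] := conv (A^-1) iAp.
  by move: (HN N (leqnn N)); rewrite subr0 ltNge all.
move=> hy.
set t := A * nrm y.
have t0 : 0 <= t by rewrite mulr_ge0 ?nge0 // ltW // Ap.
have t1 : t < 1 by rewrite /t -(mulfV (lt0r_neq0 Ap)) ltr_pM2l //; exact: Ap.
have claim : forall n, A * nrm (iter n f y) <= t ^+ n.+1 /\ A * nrm (iter n f y) <= t.
  elim=> [|n [IH1 IH2]] /=; first by rewrite expr1.
  have sm : nrm (iter n f y) < A^-1.
    rewrite -(ltr_pM2l Ap) mulfV ?(lt0r_neq0 Ap) //; lra.
  rewrite f_small //.
  have -> : A * (A * nrm (iter n f y) ^+ 2) = (A * nrm (iter n f y)) * (A * nrm (iter n f y)) by ring.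
  have u0 : 0 <= A * nrm (iter n f y) by rewrite mulr_ge0 ?nge0 // ltW // Ap.
  split.
    by rewrite exprSr; apply: ler_pM.
  nra.
have sm n : nrm (iter n f y) < A^-1.
  have [_ h] := claim n.
  rewrite -(ltr_pM2l Ap) mulfV ?(lt0r_neq0 Ap) //; lra.
split.
  move=> k; apply/negP => /eqP e; have := sm k; by rewrite e nP ltxx.
move=> eps e0.
have [N HN] := @geom R t (eps * A) t0 t1 (mulr_gt0 e0 Ap).
exists N => n Nn; rewrite subr0.
have [h _] := claim n.
rewrite -(ltr_pM2l Ap) (mulrC A eps); apply: le_lt_trans h _.
by apply: HN; apply: leqW.
Qed.


Definition D1 h := a * x2 + b * h.
Definition N1 h := (2 * a - b) * x2 + a * h.

Lemma hx : (a - b) * x2 = 1.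
Proof. by rewrite /x2 mulfV // subr_eq0. Qed.

Lemma eD h : b * (x2 + h) + 1 = D1 h.
Proof. by rewrite /D1 -hx; ring. Qed.

Lemma fx2 {h} : D1 h != 0 -> f (x2 + h) - x2 = h * N1 h / D1 h.
Proof.
move=> dn0.
have eN : a * (x2 + h) ^+ 2 - x2 * D1 h = h * N1 h.
  by rewrite /D1 /N1; ring.
rewrite /f eD -eN; field; exact: dn0.
Qed.

Lemma iCp : 0 < C^-1. Proof. by rewrite invr_gt0 Cp. Qed.

Lemma nx2 : nrm x2 = C^-1.
Proof. by rewrite /x2 nV. Qed.

Lemma nD1 h : nrm h < C^-1 -> nrm (D1 h) = A / C.
Proof.
move=> hh; rewrite /D1 nDlt'; first by rewrite nM nx2.
by rewrite !nM nx2 hab ltr_pM2l //; exact: Ap.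
Qed.

Lemma nN1 h : nrm h < C^-1 -> nrm (N1 h) = A / C.
Proof.
move=> hh; rewrite /N1 nDlt'; first by rewrite nM nx2 h2ab.
by rewrite !nM nx2 h2ab ltr_pM2l //; exact: Ap.
Qed.

Lemma AC0 : A / C != 0.
Proof. by apply: lt0r_neq0; rewrite divr_gt0 // ?Ap ?Cp. Qed.

Lemma D1n0 {h} : nrm h < C^-1 -> D1 h != 0.
Proof. by move=> hh; apply/eqP => e; move: (nD1 _ hh); rewrite e n0 => /esym/eqP; rewrite (negbTE AC0). Qed.

Lemma fx2n x : nrm (x - x2) < C^-1 -> nrm (f x - x2) = nrm (x - x2).
Proof.
move=> hh; have := fx2 (D1n0 hh); rewrite [x2 + _]addrC subrK => ->.
by rewrite ndiv nM nN1 // nD1 // mulfK // AC0.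
Qed.

Lemma notP x : nrm (x - x2) < C^-1 -> x != P.
Proof.
move=> hh; apply/eqP => e.
have := D1n0 hh; rewrite -eD [x2 + _]addrC subrK bxP e subrr mulr0.
by rewrite eqxx.
Qed.

Lemma fx2_fix : f x2 = x2.
Proof.
have h0 : nrm (0 : K) < C^-1 by rewrite n0 iCp.
have := fx2 (D1n0 h0); rewrite addr0 mul0r mul0r => /eqP; rewrite subr_eq0.
by move/eqP.
Qed.

Lemma nPx2 : nrm (P - x2) = C^-1.
Proof.
have e : P - x2 = - (a / (b * (a - b))).
  rewrite /P /x2; field.
  by rewrite subr_eq0 ab b0.
rewrite e nN ndiv nM hab -/A -/C invfM mulrA mulfV ?mul1r //.
exact: lt0r_neq0 Ap.
Qed.

Lemma siegel : siegel_disk nrm f P x2 (C^-1).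
Proof.
split; first exact: iCp.
split; first by move=> x hx'; apply: notP.
move=> rho hrho x hx' n _.
rewrite /sphere in hx' *.
elim: n => [//|n IH] /=.
by rewrite fx2n IH.
Qed.

Lemma SI_iff y : SI nrm f P x2 y <-> nrm (y - x2) < C^-1.
Proof.
split; last by move=> hy; exists (C^-1); split; [exact: siegel|].
move=> [r [[r0 [inDr _]] yr]].
rewrite ltNge; apply/negP => big.
have : ball nrm x2 r P by rewrite /ball nPx2; apply: le_lt_trans big yr.
by move/inDr; rewrite /inD eqxx.
Qed.

Lemma deriv0 : has_deriv nrm f 0 0.
Proof.
move=> eps e0.
exists (Num.min (A^-1) (eps / A)); split.
  by rewrite lt_min iAp divr_gt0 // Ap.
move=> y /andP[y0]; rewrite subr0 lt_min => /andP[y1 y2].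
have f0 : f 0 = 0 by rewrite /f expr0n mulr0 mul0r.
rewrite f0 !subr0 ndiv f_small // expr2 mulrA mulfK; last first.
  by apply: lt0r_neq0; rewrite subr0 in y0.
have AN := lt0r_neq0 Ap.
by move: y2; rewrite -(ltr_pM2l Ap) mulrCA mulfV // mulr1.
Qed.

Lemma derivx2 : has_deriv nrm f x2 ((2 * a - b) / a).
Proof.
move=> eps e0.
set Q := C ^+ 3 / A ^+ 2.
have Qp : 0 < Q by rewrite divr_gt0 // exprn_gt0 // ?Cp ?Ap.
exists (Num.min (C^-1) (eps / Q)); split.
  by rewrite lt_min iCp divr_gt0.
move=> y /andP[y0]; rewrite lt_min => /andP[y1 y2].
set h := y - x2.
have hn0 : h != 0 by apply/eqP => e; move: y0; rewrite -/h e n0 ltxx.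
have ey : y = x2 + h by rewrite /h addrC subrK.
have dn0 := D1n0 y1.
rewrite fx2_fix ey fx2 // .
have e : h * N1 h / D1 h / h - (2 * a - b) / a
         = h * ((a - b) ^+ 2) / (a * D1 h).
  rewrite /N1 /D1; rewrite /D1 in dn0; field.
  by rewrite dn0 a0 hn0.
rewrite e ndiv nM nX2 nM nD1 // -/A -/C.
have -> : nrm h * C ^+ 2 / (A * (A / C)) = nrm h * Q.
  rewrite /Q; field.
  by rewrite (lt0r_neq0 Ap) (lt0r_neq0 Cp).
by rewrite -(ltr_pM2r Qp) divfK ?(lt0r_neq0 Qp) // in y2.
Qed.

Lemma nd2 : nrm ((2 * a - b) / a) = 1.
Proof. by rewrite ndiv h2ab mulfV // (lt0r_neq0 Ap). Qed.

Lemma main_sec : attracting nrm f P 0 /\ indifferent nrm f P x2 /\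
  (forall y, basin nrm f P 0 y <-> ball nrm 0 (nrm a)^-1 y) /\
  (forall y, SI nrm f P x2 y <-> ball nrm x2 (nrm (a - b))^-1 y).
Proof.
split.
  split.
    split; first by rewrite /inD /P eq_sym oppr_eq0 invr_eq0.
    by rewrite /f expr0n mulr0 mul0r.
  by exists 0; split; [exact: deriv0 | rewrite n0 ltr01].
split.
  split.
    split; last exact: fx2_fix.
    by apply: notP; rewrite subrr n0 iCp.
  by exists ((2 * a - b) / a); split; [exact: derivx2 | exact: nd2].
split=> y; rewrite /ball.
  exact: basin_iff.
exact: SI_iff.
Qed.

End Main.

Theorem theorem3p7 (p : nat) (R : realType) (K : closedFieldType) (nrm : K -> R)
    (a b : K) :
  prime p -> (2 < p)%N -> is_Cp nrm p ->
  a != 0 -> b != 0 -> a != b ->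
  nrm (2 * a) = nrm b -> nrm (2 * a - b) = nrm a ->
  let P := - b^-1 in
  let f := fun x : K => a * x ^+ 2 / (b * x + 1) in
  let x1 := 0 in
  let x2 := (a - b)^-1 in
  attracting nrm f P x1 /\ indifferent nrm f P x2 /\
  (forall y : K, basin nrm f P x1 y <-> ball nrm x1 (nrm a)^-1 y) /\
  (forall y : K, SI nrm f P x2 y <-> ball nrm x2 (nrm (a - b))^-1 y).
Proof.
move=> _ _ [n0 [npos [nM [nD _]]]] a0 b0 ab h2a h2ab.
have hab : nrm b = nrm a.
  by apply: hab_of; try eassumption.
by apply: main_sec; try eassumption.
Qed.
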